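(* Let $(X,\phi)$ be a flow on a compact metric space $(X,d)$. Then $$\overline{\mathrm{mdim}}_M(\phi,X,d)=\overline{\mathrm{mdim}}^B(\phi,X,d).$$
   Context: A flow: $\phi:X\times\mathbb{R}\to X$ continuous, $\phi_t(x)=\phi(x,t)$, $\phi_0=\mathrm{id}$, $\phi_{t+s}=\phi_t\circ\phi_s$. $d_t(x,y)=\max_{s\in[0,t]}d(\phi_sx,\phi_sy)$, $B_t(x,\epsilon,\phi)=\{y:d_t(x,y)<\epsilon\}$. $r_t(\phi,X,d,\epsilon)$ is the minimal cardinality of $E\subset X$ with every $x\in X$ satisfying $d_t(x,y)<\epsilon$ for some $y\in E$; $r(\phi,X,d,\epsilon)=\limsup_{t\to\infty}\frac1t\log r_t(\phi,X,d,\epsilon)$; $\overline{\mathrm{mdim}}_M(\phi,X,d)=\limsup_{\epsilon\to0}\frac{r(\phi,X,d,\epsilon)}{\log(1/\epsilon)}$. Bowen upper metric mean dimension of $Z\subset X$: for $\lambda\in\mathbb{R}$, $N\in\mathbb{N}$, $\epsilon>0$, $M(\phi,d,Z,\lambda,N,\epsilon)=\inf\sum_{i\in I}e^{-n_i\lambda}$ over finite or countable families $\{B_{n_i}(x_i,\epsilon,\phi)\}_{i\in I}$ covering $Z$ with $n_i\ge N$; $M(\phi,d,Z,\lambda,\epsilon)=\lim_{N\to\infty}M(\phi,d,Z,\lambda,N,\epsilon)$; $M(\phi,d,Z,\epsilon)=\inf\{\lambda:M(\phi,d,Z,\lambda,\epsilon)=0\}$; $\overline{\mathrm{mdim}}^B(\phi,Z,d)=\limsup_{\epsilon\to0}\frac{M(\phi,d,Z,\epsilon)}{\log(1/\epsilon)}$.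 *)

(* Defs.v *)
From HB Require Import structures.
From mathcomp Require Import all_boot all_order all_algebra finmap.
From mathcomp Require Import all_classical all_reals all_analysis.

Set Implicit Arguments.
Unset Strict Implicit.
Unset Printing Implicit Defensive.

Import Order.TTheory GRing.Theory Num.Theory.
Import numFieldNormedType.Exports.
Local Open Scope classical_set_scope.
Local Open Scope ring_scope.

Section FlowDefs.
Context {R : realType} {X : metricType R}.

(* d is the metric of X; phi x t = phi_t(x). *)
Definition d : X -> X -> R := @mdist R X.

Definition is_flow (phi : X -> R -> X) : Prop :=
  [/\ continuous (fun p : X * R => phi p.1 p.2),
      (forall x, phi x 0 = x) &
      (forall x t s, phi x (t + s) = phi (phi x s) t)].

Definition dt (phi : X -> R -> X) (t : R) (x y : X) : R :=
  sup [set d (phi x s) (phi y s) | s in `[0, t]].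

Definition bowen_ball (phi : X -> R -> X) (t : R) (x : X) (eps : R) : set X :=
  [set y | dt phi t x y < eps].

Definition spanning (phi : X -> R -> X) (t eps : R) (E : {fset X}) : Prop :=
  forall x : X, exists2 y, y \in E & dt phi t x y < eps.

(* r_t(phi, X, d, eps): minimal cardinality of a spanning set (+oo if none is finite) *)
Definition r_t (phi : X -> R -> X) (t eps : R) : \bar R :=
  ereal_inf [set ((#|` E|)%:R)%:E | E in [set E | spanning phi t eps E]].

Definition elog (x : \bar R) : \bar R :=
  match x with
  | r%:E => if (0 < r)%R then (ln r)%:E else -oo
  | +oo => +oo
  | -oo => -oo
  end%E.

Definition r_rate (phi : X -> R -> X) (eps : R) : \bar R :=
  limf_esup (fun t : R => ((t^-1)%:E * elog (r_t phi t eps))%E) (pinfty_nbhs R).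

Definition mdimM (phi : X -> R -> X) : \bar R :=
  limf_esup (fun eps : R => (r_rate phi eps * ((ln (eps^-1))^-1)%:E)%E) (0^'+).

(* Bowen upper metric mean dimension.
   A finite or countable family {B_{n_i}(x_i, eps)}_{i in I} is encoded as
   f : nat -> option (X * nat), the family being indexed by {i | f i <> None}. *)
Definition bowen_cover (phi : X -> R -> X) (Z : set X) (N : nat) (eps : R)
    (f : nat -> option (X * nat)) : Prop :=
  (forall i x n, f i = Some (x, n) -> (N <= n)%N) /\
  (Z `<=` \bigcup_(i in [set: nat])
      (match f i with
       | Some (x, n) => bowen_ball phi n%:R x eps
       | None => set0
       end)).

Definition bowen_weight (lam : R) (f : nat -> option (X * nat)) (i : nat) : \bar R :=
  match f i with
  | Some (_, n) => (expR (- (n%:R * lam)))%:E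
  | None => 0%E
  end.

Definition M_N (phi : X -> R -> X) (Z : set X) (lam : R) (N : nat) (eps : R) : \bar R :=
  ereal_inf [set (\sum_(i <oo) bowen_weight lam f i)%E
            | f in [set f | bowen_cover phi Z N eps f]].

Definition M_lam (phi : X -> R -> X) (Z : set X) (lam : R) (eps : R) : \bar R :=
  limn (fun N => M_N phi Z lam N eps).

Definition M_crit (phi : X -> R -> X) (Z : set X) (eps : R) : \bar R :=
  ereal_inf [set lam%:E | lam in [set lam | M_lam phi Z lam eps = 0%E]].

Definition mdimB (phi : X -> R -> X) (Z : set X) : \bar R :=
  limf_esup (fun eps : R => (M_crit phi Z eps * ((ln (eps^-1))^-1)%:E)%E) (0^'+).

End FlowDefs.

(* Main.v *)
Require Import Defs.
From HB Require Import structures.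
From mathcomp Require Import all_boot all_order all_algebra finmap.
From mathcomp Require Import all_classical all_reals all_analysis.
From mathcomp Require Import ring lra zify.
Set Implicit Arguments. Unset Strict Implicit. Unset Printing Implicit Defensive.
Import Order.TTheory GRing.Theory Num.Theory.
Import numFieldNormedType.Exports.
Local Open Scope classical_set_scope.
Local Open Scope ring_scope.
Section ERealAux.
Variable R : realType.
Local Open Scope ereal_scope.

Lemma elog_le (x : \bar R) (B : R) : (0 < B)%R -> x <= B%:E -> elog x <= (ln B)%:E.
Proof.
move=> B0; case: x => [r| |] //=; rewrite ?leNye // lee_fin => rB.
case: ifP => r0; last by rewrite leNye.
by rewrite lee_fin ler_ln // posrE.
Qed.

Lemma elog_lt (x : \bar R) (c : R) : elog x < c%:E -> x < (expR c)%:E.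
Proof.
case: x => [r| |] //=; rewrite ?ltNye // => h.
  rewrite lte_fin; case: ifP h => r0 h; last first.
    by apply: le_lt_trans (expR_gt0 c); rewrite leNgt r0.
  by rewrite -[r]lnK ?posrE // ltr_expR -lte_fin.
Qed.

Lemma mulV_lt (t : R) (y : \bar R) (b : R) : (0 < t)%R ->
  (t^-1)%:E * y < b%:E -> y < (t * b)%:E.
Proof.
move=> t0; case: y => [r| |] //=.
- by rewrite -EFinM !lte_fin ltr_pdivrMl.
- by rewrite mulry gtr0_sg ?invr_gt0 // mul1e.
- by rewrite ltNye.
Qed.

Lemma limf_esup_le (F : set_system R) (f : R -> \bar R) (a : \bar R) V :
  F V -> (forall t, V t -> f t <= a) -> limf_esup f F <= a.
Proof.
move=> FV H; apply: le_trans (ereal_inf_lbound _) _; first by exists V.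
by apply: ge_ereal_sup => _ [t Vt <-]; exact: H.
Qed.

Lemma limf_esup_lt (F : set_system R) (f : R -> \bar R) (a : \bar R) :
  limf_esup f F < a -> exists2 V, F V & forall t, V t -> f t < a.
Proof.
move=> /ereal_inf_lt [_ [V FV <-]] h; exists V => // t Vt.
by apply: le_lt_trans h; apply: ereal_sup_ubound; exists t.
Qed.

Lemma le_ereal_forall (x y : \bar R) :
  (forall a : R, y < a%:E -> x <= a%:E) -> x <= y.
Proof.
move=> H; case: y H => [r| |] H.
- apply/lee_addgt0Pr => e e0; apply: H; rewrite lte_fin ltrDl //.
- by rewrite leey.
- case: x H => [r| |] H //.
  + have := H (r - 1)%R (ltNyr _); rewrite lee_fin => h.
    have : (r - 1 < r)%R by rewrite ltrBlDr ltrDl ltr01.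
    by rewrite ltNge h.
  + by have := H 0%R (ltNyr _).
Qed.

Lemma lt_between (x : \bar R) (a : R) : x < a%:E -> exists2 b : R, x < b%:E & (b < a)%R.
Proof.
case: x => [r| |] //=.
- rewrite lte_fin => ra; exists ((r + a) / 2)%R; rewrite ?lte_fin; lra.
- move=> _; exists (a - 1)%R; rewrite ?ltNyr //; lra.
Qed.
End ERealAux.
Section Comb.
Variables (R : realType) (X : metricType R) (phi : X -> R -> X).
Variables (ix : X -> nat) (nn : nat -> nat) (s : seq nat).

Fixpoint itin (fuel T : nat) (x : X) : seq nat :=
  match fuel with
  | 0 => [::]
  | fuel'.+1 => if (T <= nn (ix x))%N then [:: ix x]
                else ix x :: itin fuel' (T - nn (ix x)) (phi x (nn (ix x))%:R)
  end.

Fixpoint words (fuel T : nat) : seq (seq nat) :=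
  match fuel with
  | 0 => [::]
  | fuel'.+1 => flatten [seq (if (T <= nn i)%N then [:: [:: i]]
                              else [seq i :: w | w <- words fuel' (T - nn i)]) | i <- s]
  end.

Hypothesis ixs : forall x, ix x \in s.
Hypothesis nn1 : forall x, (1 <= nn (ix x))%N.

Lemma itin_mem fuel T x : (T < fuel)%N -> itin fuel T x \in words fuel T.
Proof.
elim: fuel T x => [//|f IH] T x /= Tf.
apply/flatten_mapP; exists (ix x); first exact: ixs.
case: ifP => hT; first by rewrite mem_seq1.
rewrite map_f // IH //.
have := nn1 x; move: hT Tf; rewrite ltnS; lia.
Qed.

Variables (lam K L : R).
Hypothesis sum1 : \sum_(i <- s) expR (- ((nn i)%:R * lam)) <= 1.
Hypothesis nnL : forall i, i \in s -> (nn i)%:R <= L.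
Hypothesis L0 : 0 <= L.
Hypothesis KL : expR (`|lam| * L) <= K.

Lemma words_size fuel T : (size (words fuel T))%:R <= K * expR (lam * T%:R).
Proof.
have K0 : 0 <= K by apply: le_trans KL; exact: ltW (expR_gt0 _).
elim: fuel T => [|f IH] T /=; first by rewrite mulr_ge0 // ltW // expR_gt0.
rewrite size_flatten sumnE /shape -map_comp big_map natr_sum.
apply: (@le_trans _ _ (\sum_(i <- s) K * expR (lam * T%:R) * expR (- ((nn i)%:R * lam)))).
  rewrite big_seq_cond [leRHS]big_seq_cond; apply: ler_sum => i /andP [si _] /=.
  case: ifP => hT.
    rewrite /= -mulrA -expRD.
    apply: (@le_trans _ _ (expR (`|lam| * L) * expR (lam * T%:R + - ((nn i)%:R * lam)))); last first.
      by rewrite ler_wpM2r // ltW // expR_gt0.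
    rewrite -expRD -[leLHS]expR0 ler_expR.
    have h0 := nnL si; have hT' : T%:R <= (nn i)%:R :> R by rewrite ler_nat.
    have la : lam <= `|lam| by exact: ler_norm.
    have T0 : 0 <= T%:R :> R by [].
    have h1 : 0 <= (`|lam| - lam) * ((nn i)%:R - T%:R) by rewrite mulr_ge0 // subr_ge0.
    have h2 : 0 <= `|lam| * (L - (nn i)%:R) by rewrite mulr_ge0 // subr_ge0.
    have h3 : 0 <= `|lam| * T%:R by rewrite mulr_ge0.
    apply: le_trans (addr_ge0 (addr_ge0 h1 h2) h3) _.
    by rewrite le_eqVlt; apply/orP; left; apply/eqP; ring.
  rewrite size_map; apply: le_trans (IH _) _.
  rewrite -mulrA -expRD ler_wpM2l // ler_expR natrB; last by rewrite ltnW // ltnNge hT.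
  by rewrite le_eqVlt; apply/orP; left; apply/eqP; ring.
rewrite -big_distrr /= -[leRHS]mulr1 ler_wpM2l //.
by rewrite mulr_ge0 // ltW // expR_gt0.
Qed.

Variable (c : R).
Hypothesis flow : forall x t u, phi x (t + u) = phi (phi x u) t.
Hypothesis Hb : forall x y, ix x = ix y ->
  forall u, 0 <= u <= (nn (ix x))%:R -> d (phi x u) (phi y u) <= c.

Lemma itin_close fuel T x y : (T < fuel)%N -> itin fuel T x = itin fuel T y ->
  forall u, 0 <= u <= T%:R -> d (phi x u) (phi y u) <= c.
Proof.
elim: fuel T x y => [//|f IH] T x y Tf E u /andP [u0 uT].
have exy : ix x = ix y.
  by have := congr1 (head 0%N) E; rewrite /=; case: ifP => _; case: ifP.
move: E => /=; rewrite -exy; case: ifP => hT E.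
  apply: Hb => //; rewrite u0 /=; apply: le_trans uT _; by rewrite ler_nat.
case: E => E.
case: (lerP u (nn (ix x))%:R) => hu; first by apply: Hb => //; rewrite u0.
have -> : phi x u = phi (phi x (nn (ix x))%:R) (u - (nn (ix x))%:R) by rewrite -flow subrK.
have -> : phi y u = phi (phi y (nn (ix x))%:R) (u - (nn (ix x))%:R) by rewrite -flow subrK.
apply: (IH (T - nn (ix x))%N) => //.
  by have := nn1 x; move: hT Tf; rewrite ltnS; lia.
rewrite subr_ge0 (ltW hu) /= natrB; last by rewrite ltnW // ltnNge hT.
by rewrite lerB.
Qed.
End Comb.
Section Main.
Variables (R : realType) (X : metricType R) (phi : X -> R -> X).
Hypothesis cX : compact [set: X].
Hypothesis fl : is_flow phi.

Lemma dC (x y : X) : d x y = d y x.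
Proof. exact: metric_sym. Qed.
Lemma d_ge0 (x y : X) : 0 <= d x y.
Proof. exact: mdist_ge0. Qed.
Lemma d_tri (x y z : X) : d x z <= d x y + d y z.
Proof. exact: metric_triangle. Qed.

Lemma X_bounded : exists D, forall x y : X, d x y <= D.
Proof.
have [[x0 _]|nX] := pselect (exists x : X, True); last first.
  by exists 0 => x; exfalso; apply: nX; exists x.
have := cX; rewrite compact_near_coveringP => /(_ R (pinfty_nbhs R)
   (fun D x => d x0 x < D)).
case.
move=> x _.
- exists (ball x 1, [set D | d x0 x + 1 < D]).
    split => /=; first exact: nbhsx_ballx.
    by exists (d x0 x + 1); split; [exact: num_real|].
  case=> x' D /= [] + h; rewrite ballEmdist /= => h1.
    apply: le_lt_trans (d_tri x0 x x') _.
    by apply: lt_trans h; rewrite ltrD2l.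
move=> M [_ HM].
exists ((M + 1) + (M + 1)) => x y.
have HM1 : forall z, d x0 z < M + 1 by move=> z; apply: (HM (M + 1)) => //; rewrite ltrDl.
apply: le_trans (d_tri x x0 y) _.
rewrite dC; apply: lerD; apply: ltW; exact: HM1.
Qed.

Lemma dt_ub t x y s : 0 <= s <= t -> d (phi x s) (phi y s) <= dt phi t x y.
Proof.
move=> st; have [D HD] := X_bounded.
apply: ub_le_sup.
- by exists D => _ [u _ <-]; exact: HD.
- by exists s => //; rewrite /= in_itv /=.
Qed.

Lemma dt_le t x y c : 0 <= c ->
  (forall s, 0 <= s <= t -> d (phi x s) (phi y s) <= c) -> dt phi t x y <= c.
Proof.
move=> c0 H; rewrite /dt.
have [[u Hu]|ne] := pselect ([set d (phi x s) (phi y s) | s in `[0, t]] !=set0).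
- apply: ge_sup; first by exists u.
  move=> _ [s hs <-]; apply: H; move: hs; by rewrite /= in_itv /=.
- have -> : [set d (phi x s) (phi y s) | s in `[0, t]] = set0.
    by apply/seteqP; split => z hz //; apply: ne; exists z.
  by rewrite sup0.
Qed.

Lemma dt_ge0 t x y : 0 <= t -> 0 <= dt phi t x y.
Proof.
move=> t0; apply: le_trans (d_ge0 (phi x 0) (phi y 0)) _.
by apply: dt_ub; rewrite lexx.
Qed.

Lemma dtC t x y : dt phi t x y = dt phi t y x.
Proof.
by rewrite /dt; congr (sup _); apply: eq_imagel => s _; exact: dC.
Qed.

Lemma tube (y0 : X) (a b del : R) : 0 < del ->
  \forall y \near y0, forall s, a <= s <= b -> d (phi y0 s) (phi y s) < del.
Proof.
move=> del0; case: fl => ctn _ _.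
have := @segment_compact R a b; rewrite compact_near_coveringP.
move=> /(_ X (nbhs y0) (fun y s => d (phi y0 s) (phi y s) < del)).
move=> cov.
have H : forall s : R, `[a, b]%classic s ->
    \forall x' \near s & i \near nbhs y0, d (phi y0 x') (phi i x') < del.
  move=> s _.
  have del2 : 0 < del / 2 by rewrite divr_gt0.
  have := ctn (y0, s) => /metricType_numDomainType.cvgr_dist_lt /(_ _ del2) H.
  case: H => [[U V] [/= Uy Vs] sub].
  exists (V, U); first by split.
  case=> s' y [/= Vs' Uy'].
  have h1 := sub (y, s') (conj Uy' Vs').
  have h2 := sub (y0, s') (conj (nbhs_singleton Uy) Vs').
  move: h1 h2 => /= h1 h2.
  apply: le_lt_trans (d_tri _ (phi y0 s) _) _.
  rewrite dC (splitr del); apply: ltrD; [exact: h2|exact: h1].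
apply: filterS (cov _ H) => y Hy s hs; apply: Hy.
by rewrite /= in_itv /=.
Qed.

Lemma bowen_open (n : nat) c eps : open (bowen_ball phi n%:R c eps).
Proof.
rewrite openE => y0 /= H; rewrite /interior.
set g := dt phi n%:R c y0 in H.
have del0 : 0 < (eps - g) / 2 by rewrite divr_gt0 // subr_gt0.
apply: filterS (tube y0 0 n%:R del0) => y Hy.
rewrite /bowen_ball /=.
have g0 : 0 <= g by exact: dt_ge0.
apply: (@le_lt_trans _ _ (g + (eps - g) / 2)).
- apply: dt_le; first by rewrite addr_ge0 // ltW.
  move=> s hs; apply: le_trans (d_tri _ (phi y0 s) _) _.
  apply: lerD; first exact: dt_ub.
  exact: ltW (Hy s hs).
- lra.
Qed.


Lemma M_N_mono Z lam eps (N N' : nat) : (N <= N')%N ->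
  (M_N phi Z lam N eps <= M_N phi Z lam N' eps)%E.
Proof.
move=> NN; apply: ereal_inf_le_tmp => _ [f [Hf Hc] <-]; exists f => //.
by split => // i x n /Hf; exact: leq_trans NN.
Qed.

Lemma M_lamE Z lam eps :
  M_lam phi Z lam eps = ereal_sup (range (fun N => M_N phi Z lam N eps)).
Proof.
rewrite /M_lam; apply: cvg_lim => //.
by apply: ereal_nondecreasing_cvgn => m n mn; exact: M_N_mono.
Qed.

Lemma B_cover eps lam : M_lam phi [set: X] lam eps = 0%E ->
  exists f, bowen_cover phi [set: X] 1%N eps f /\
            (\sum_(i <oo) bowen_weight lam f i < 1)%E.
Proof.
move=> H.
have h1 : (M_N phi [set: X] lam 1 eps <= M_lam phi [set: X] lam eps)%E.
  by rewrite M_lamE; apply: ereal_sup_ubound; exists 1%N.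
have : (M_N phi [set: X] lam 1 eps < 1)%E.
  by apply: le_lt_trans h1 _; rewrite H lte_fin ltr01.
by move=> /ereal_inf_lt [_ [f Hf <-]] h; exists f.
Qed.

Lemma weight_ge0 (lam : R) (f : nat -> option (X * nat)) i : (0 <= bowen_weight lam f i)%E.
Proof.
by rewrite /bowen_weight; case: (f i) => [[x n]|] //; rewrite lee_fin ltW // expR_gt0.
Qed.

Lemma B_main eps lam : 0 < eps -> M_lam phi [set: X] lam eps = 0%E ->
  (r_rate phi (3 * eps) <= lam%:E)%E.
Proof.
move=> e0 /B_cover [f [[fN fcov] fsum]].
case: (fl) => _ _ flow.
pose g i := match f i with Some (c, n) => bowen_ball phi n%:R c eps | None => set0 end.
have [N HN] : exists N, forall x, exists2 i, (i < N)%N & g i x.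
  have := cX; rewrite compact_near_coveringP.
  move=> /(_ nat \oo (fun N x => exists2 i, (i < N)%N & g i x)) cov.
  have H : forall x, [set: X] x ->
      \forall x' \near x & N \near \oo, exists2 i, (i < N)%N & g i x'.
    move=> x _; have [i _ gix] := fcov x I.
    have og : open (g i).
      by rewrite /g; case: (f i) => [[c n]|]; [exact: bowen_open|exact: open0].
    exists (g i, [set N | (i < N)%N]); first split.
    - by move: og; rewrite openE => /(_ x gix).
    - by exists i.+1.
    - by case=> x' M /= [gx' iM]; exists i.
  have [M _ HM] := cov _ H.
  by exists M => x; exact: (HM M (leqnn M) x I).
pose nn i := if f i is Some (_, n) then n else 0%N.
have gP : forall i x, g i x -> exists c, f i = Some (c, nn i) /\ dt phi (nn i)%:R c x < eps.
  by move=> i x; rewrite /g /nn; case: (f i) => [[c n]|] // h; exists c.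
have [ix hix] : {ix : X -> nat & forall x, (ix x < N)%N /\ g (ix x) x}.
  apply: (@choice X nat (fun x i => (i < N)%N /\ g i x)) => x.
  by have [i h1 h2] := HN x; exists i.
pose s := [seq i <- index_iota 0 N | isSome (f i)].
have ixs : forall x, ix x \in s.
  move=> x; rewrite mem_filter mem_index_iota (hix x).1 andbT.
  by have [c [-> _]] := gP _ _ (hix x).2.
have nn1 : forall x, (1 <= nn (ix x))%N.
  by move=> x; have [c [fc _]] := gP _ _ (hix x).2; exact: (fN _ _ _ fc).
pose L : R := (\max_(j < N) nn j)%:R.
have nnL : forall i, i \in s -> (nn i)%:R <= L.
  move=> i; rewrite mem_filter mem_index_iota => /andP [_ /andP [_ iN]].
  by rewrite ler_nat; exact: (leq_bigmax (Ordinal iN)).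
have L0 : 0 <= L by [].
pose K := expR (`|lam| * L).
have sum1 : \sum_(i <- s) expR (- ((nn i)%:R * lam)) <= 1.
  rewrite -lee_fin -sumEFin; apply: le_trans (ltW fsum).
  apply: (@le_trans _ _ (\sum_(0 <= i < N) bowen_weight lam f i)%E); last first.
    by apply: nneseries_lim_ge => n _ _; exact: weight_ge0.
  rewrite /s big_filter big_mkcond /=; apply: lee_sum => i _.
  rewrite /bowen_weight /nn; case: (f i) => [[c n]|] //=.
have Hb : forall x y, ix x = ix y ->
    forall u, 0 <= u <= (nn (ix x))%:R -> d (phi x u) (phi y u) <= 2 * eps.
  move=> x y exy u hu.
  have [c [fc hx]] := gP _ _ (hix x).2.
  have [c' [fc' hy]] := gP _ _ (hix y).2.
  rewrite -exy fc in fc'; case: fc' => <- in hy; rewrite -exy in hy.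
  have h1 : d (phi x u) (phi c u) <= eps.
    by rewrite dC; apply: le_trans (dt_ub _ _ hu) (ltW hx).
  have h2 : d (phi c u) (phi y u) <= eps.
    by apply: le_trans (dt_ub _ _ hu) (ltW hy).
  apply: le_trans (d_tri _ (phi c u) _) _.
  have := lerD h1 h2; lra.
have rtB : forall t, 0 <= t ->
    (r_t phi t (3 * eps) <= (K * expR (lam * (Num.truncn t).+1%:R))%:E)%E.
  move=> t t0; set T := (Num.truncn t).+1.
  have tT : t <= T%:R by apply: ltW; exact: truncnS_gt.
  have [[x0 _]|nX] := pselect (exists x : X, True); last first.
    apply: le_trans (ereal_inf_lbound _) _.
      by exists [fset x in [::] : seq X]%fset => // x; exfalso; apply: nX; exists x.
    by rewrite /= card_fseq /= lee_fin mulr_ge0 // ltW // expR_gt0.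
  pose rep w := xget x0 [set x | itin phi ix nn T.+1 T x = w].
  pose E := [fset x in [seq rep w | w <- words nn s T.+1 T]]%fset.
  apply: le_trans (ereal_inf_lbound _) _.
    exists E => // x; exists (rep (itin phi ix nn T.+1 T x)).
      by rewrite inE; apply/mapP; exists (itin phi ix nn T.+1 T x) => //; apply: itin_mem.
    have hr : itin phi ix nn T.+1 T (rep (itin phi ix nn T.+1 T x)) =
              itin phi ix nn T.+1 T x.
      exact: (@xgetI _ x0 [set z | itin phi ix nn T.+1 T z = itin phi ix nn T.+1 T x] x erefl).
    apply: (@le_lt_trans _ _ (2 * eps)); last lra.
    apply: dt_le; first lra.
    move=> u /andP [u0 ut].
    apply: (itin_close nn1 sum1 L0 (lexx K) flow Hb (ltnSn T) (esym hr)).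
    by rewrite u0; apply: le_trans tT.
  rewrite lee_fin; apply: (le_trans _ (words_size sum1 nnL (lexx K) T.+1 T)).
  by rewrite ler_nat card_fseq -(size_map rep); exact: size_undup.
apply/lee_addgt0Pr => eta eta0; rewrite -EFinD.
have LK : ln K = `|lam| * L by rewrite /K expRK.
pose C := ln K + `|lam|.
have C0 : 0 <= C by rewrite /C addr_ge0 // LK mulr_ge0.
apply: (@limf_esup_le _ _ _ _ [set t | Num.max 1 (C / eta) < t]).
  by exists (Num.max 1 (C / eta)); split; [exact: num_real|move=> t].
move=> t /= ht.
have t1 : 1 < t by apply: le_lt_trans ht; rewrite le_max lexx.
have tC : C / eta < t by apply: le_lt_trans ht; rewrite le_max lexx orbT.
have t0 : 0 < t by apply: lt_trans t1.
set T := (Num.truncn t).+1.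
have hT1 : t < T%:R by exact: truncnS_gt.
have hT2 : T%:R <= t + 1.
  by rewrite /T -addn1 natrD lerD2r truncn_le ltW.
have B0 : 0 < K * expR (lam * T%:R) by rewrite mulr_gt0 // expR_gt0.
have hl := elog_le B0 (rtB t (ltW t0)).
rewrite lnM ?posrE ?expR_gt0 // expRK in hl.
apply: le_trans (lee_wpmul2l _ hl) _; first by rewrite lee_fin invr_ge0 ltW.
rewrite -EFinM lee_fin mulrC ler_pdivrMr //.
have hlam : lam * T%:R <= lam * t + `|lam|.
  have d0 : 0 <= T%:R - t by rewrite subr_ge0 ltW.
  have d1 : T%:R - t <= 1 by lra.
  have h1 : lam * (T%:R - t) <= `|lam| * (T%:R - t) by rewrite ler_wpM2r // ler_norm.
  have h2 : `|lam| * (T%:R - t) <= `|lam| by rewrite ler_piMr.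
  have : lam * (T%:R - t) = lam * T%:R - lam * t by rewrite mulrBr.
  lra.
have hC : C <= eta * t.
  by move: tC; rewrite ltr_pdivrMr // mulrC => /ltW.
have : ln K + lam * T%:R <= C + lam * t by rewrite /C; lra.
have : (lam + eta) * t = lam * t + eta * t by rewrite mulrDl.
lra.
Qed.

Lemma nth_cover (l : seq X) (n : nat) i x m :
  nth None [seq Some (y, n) | y <- l] i = Some (x, m) -> m = n.
Proof.
elim: l i => [|y l IH] [|i] /=; rewrite ?nth_nil //.
- by move=> h; case: h => _ ->.
- exact: IH.
Qed.

Lemma nth_cover_mem (l : seq X) (n : nat) y : y \in l ->
  exists i, nth None [seq Some (z, n) | z <- l] i = Some (y, n).
Proof.
elim: l => [|z l IH] //=; rewrite in_cons => /orP [/eqP ->|/IH [i hi]].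
- by exists 0%N.
- by exists i.+1.
Qed.

Lemma sum_if_le (L m : nat) (e : R) : 0 <= e ->
  \sum_(0 <= i < m) (if (i < L)%N then e else 0) <= L%:R * e.
Proof.
move=> e0.
have -> : \sum_(0 <= i < m) (if (i < L)%N then e else 0) = (minn m L)%:R * e.
  elim: m => [|m IH]; first by rewrite big_geq // min0n mul0r.
  rewrite big_nat_recr //= IH; case: ifP => hm.
    have -> : minn m.+1 L = (minn m L).+1 by lia.
    by rewrite -nat1r mulrDl mul1r addrC.
  have -> : minn m.+1 L = minn m L by move/negbT: hm; lia.
  by rewrite addr0.
by rewrite ler_wpM2r // ler_nat geq_minr.
Qed.

Lemma A_main eps : (M_crit phi [set: X] eps <= r_rate phi eps)%E.
Proof.
apply: le_ereal_forall => a /lt_between [b hb ba].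
have [V [M0 [_ HV]] HfV] := limf_esup_lt hb.
have HN : forall N, M_N phi [set: X] a N eps = 0%E.
  move=> N; apply/eqP; rewrite eq_le; apply/andP; split; last first.
    apply: le_ereal_inf_tmp => _ [f _ <-].
    by apply: nneseries_ge0 => n _ _; exact: weight_ge0.
  apply/lee_addgt0Pr => del del0; rewrite add0e.
  pose D := a - b.
  have D0 : 0 < D by rewrite subr_gt0.
  pose n := (N + Num.truncn (`|M0| + `|ln del| / D)).+1.
  have hn : `|M0| + `|ln del| / D < n%:R.
    by apply: lt_le_trans (truncnS_gt _) _; rewrite ler_nat /n ltnS leq_addl.
  have hn0 : 0 < n%:R :> R by rewrite ltr0n.
  have hNn : (N <= n)%N by rewrite /n; lia.
  have hM0 : M0 < n%:R.
    apply: le_lt_trans hn; rewrite -[leLHS]addr0 lerD ?ler_norm //.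
    by rewrite divr_ge0 // ltW.
  have hdel : expR (- (n%:R * D)) <= del.
    rewrite -[leRHS]lnK ?posrE // ler_expR.
    have : `|ln del| / D * D < n%:R * D.
      by rewrite ltr_pM2r //; apply: le_lt_trans hn; rewrite lerDr.
    rewrite divfK ?gt_eqF //.
    have := ler_norm (- ln del); rewrite normrN; lra.
  have := HfV _ (HV _ hM0).
  move=> /(mulV_lt hn0) /elog_lt /ereal_inf_lt [_ [E spE <-]] hE.
  rewrite lte_fin in hE.
  pose fc i := nth None [seq Some (z, n) | z <- (E : seq X)] i.
  apply: le_trans (ereal_inf_lbound _) _.
    exists fc => //; split.
      by move=> i x m /nth_cover ->.
    move=> x _; have [y yE hy] := spE x.
    have [i hi] := nth_cover_mem n yE.
    by exists i => //; rewrite /fc hi /bowen_ball /= dtC.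
  have wle : forall i, (bowen_weight a fc i <=
      (if (i < #|` E|)%N then expR (- (n%:R * a)) else 0)%:E)%E.
    move=> i; rewrite /bowen_weight /fc.
    case: ltnP => hi; last by rewrite nth_default // size_map.
    case E1: (nth _ _ _) => [[x m]|] //.
    by rewrite (nth_cover E1).
  apply: (@le_trans _ _ ((#|` E|)%:R * expR (- (n%:R * a)))%:E).
    apply: lime_le; first by apply: is_cvg_nneseries => m _ _; exact: weight_ge0.
    apply: nearW => m.
    apply: le_trans (lee_sum _ (fun i _ => wle i)) _.
    by rewrite sumEFin lee_fin sum_if_le // ltW // expR_gt0.
  rewrite lee_fin; apply: le_trans hdel.
  apply: le_trans (_ : expR (n%:R * b) * expR (- (n%:R * a)) <= _).
    by rewrite ler_wpM2r // ?ltW // expR_gt0.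
  by rewrite -expRD /D le_eqVlt; apply/orP; left; apply/eqP; congr expR; ring.
have HM : M_lam phi [set: X] a eps = 0%E.
  rewrite /M_lam (_ : (fun N => M_N phi [set: X] a N eps) = fun _ => 0%E).
    exact: lim_cst.
  by apply: funext => N; exact: HN.
by apply: ereal_inf_lbound; exists a.
Qed.

Lemma at_right_ball (V : set R) : (0^'+ : set_system R) V ->
  exists2 del : R, 0 < del & forall e, 0 < e < del -> V e.
Proof.
move=> /nbhs_ballP [del del0 H]; exists del => // e /andP [e0 ed].
by apply: H => //; rewrite -ball_normE /ball_ /= sub0r normrN gtr0_norm.
Qed.

Lemma at_rightP (V : set R) :
  (exists2 del : R, 0 < del & forall e, 0 < e < del -> V e) -> (0^'+ : set_system R) V.
Proof.
move=> [del del0 H]; apply/nbhs_ballP; exists del => // e /= he e0.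
by apply: H; rewrite e0 /=; move: he; rewrite -ball_normE /ball_ /= sub0r normrN gtr0_norm.
Qed.

Lemma B_le eps : 0 < eps -> (r_rate phi (3 * eps) <= M_crit phi [set: X] eps)%E.
Proof.
move=> e0; apply: le_ereal_forall => a /ereal_inf_lt [_ [lam0 hlam <-]].
rewrite lte_fin => la.
by apply: le_trans (B_main e0 hlam) _; rewrite lee_fin ltW.
Qed.

Lemma final : mdimM phi = mdimB phi [set: X].
Proof.
apply/eqP; rewrite eq_le; apply/andP; split.
- apply: le_ereal_forall => a /limf_esup_lt [V FV HV].
  have [del del0 HVd] := at_right_ball FV.
  apply/lee_addgt0Pr => eta eta0; rewrite -EFinD.
  pose c := ln 3 * `|a| / eta.
  pose del' := Num.min (Num.min (del * 3) (2^-1)) (expR (- c)).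
  have del0' : 0 < del' by rewrite /del' !lt_min mulr_gt0 // invr_gt0 ltr0n expR_gt0.
  apply: (@limf_esup_le _ _ _ _ [set e | 0 < e < del']).
    by apply: at_rightP; exists del'.
  move=> e /andP [e0 ed'].
  move: ed'; rewrite !lt_min => /andP [/andP [ed e2] ec].
  have e3 : 0 < e / 3 by rewrite divr_gt0.
  have e3' : 0 < e / 3 < del by rewrite e3 ltr_pdivrMr.
  have hV := HV _ (HVd _ e3').
  have := B_le e3; rewrite (_ : 3 * (e / 3) = e); last first.
    by rewrite mulrC -mulrA mulVf ?mulr1.
  move=> hB.
  move: hV.
  set w := ln (e^-1).
  have hu : ln ((e / 3)^-1) = ln 3 + w.
    by rewrite invf_div lnM ?posrE ?invr_gt0.
  rewrite hu.
  have w0 : 0 < w.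
    by rewrite /w ln_gt0 // invf_gt1 //; apply: lt_trans e2 _; lra.
  have wc : c <= w.
    rewrite /w lnV ?posrE // lerNr -ler_expR lnK ?posrE //; exact: ltW.
  have u0 : 0 < ln 3 + w.
    by rewrite addr_gt0 // ln_gt0 // ltr1n.
  rewrite muleC => /(mulV_lt u0) hM.
  apply: le_trans (lee_wpmul2r _ (le_trans hB (ltW hM))) _.
    by rewrite lee_fin invr_ge0 ltW.
  rewrite -EFinM lee_fin ler_pdivrMr //.
  have l3 : 0 <= ln 3 :> R by rewrite ln_ge0 // ler1n.
  have h1 : ln 3 * a <= ln 3 * `|a| by rewrite ler_wpM2l // ler_norm.
  have h2 : ln 3 * `|a| <= eta * w.
    by move: wc; rewrite /c ler_pdivrMr // => h; lra.
  have : (ln 3 + w) * a = ln 3 * a + w * a by rewrite mulrDl.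
  have : (a + eta) * w = w * a + eta * w by rewrite mulrDl mulrC.
  lra.
- apply: le_ereal_forall => a /limf_esup_lt [V FV HV].
  have [del del0 HVd] := at_right_ball FV.
  apply: (@limf_esup_le _ _ _ _ [set e | 0 < e < Num.min del 1]).
    by apply: at_rightP; exists (Num.min del 1) => //; rewrite lt_min del0 ltr01.
  move=> e /andP [e0]; rewrite lt_min => /andP [ed e1].
  have ed2 : 0 < e < del by rewrite e0.
  have he := HV e (HVd _ ed2).
  apply: le_trans (ltW he).
  apply: lee_wpmul2r; last exact: A_main.
  by rewrite lee_fin invr_ge0 ln_ge0 // invf_ge1 // ltW.
Qed.
End Main.

Theorem proposition2p12 (R : realType) (X : metricType R) (phi : X -> R -> X) :
  compact [set: X] -> is_flow phi -> mdimM phi = mdimB phi [set: X].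
Proof. move=> cX fl; exact: (final cX fl). Qed.
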